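(* Let $S \subseteq \mathbb{R}^n$ be nonempty, closed and convex, and let $F_i = f_i + g_i$, $i=1,\dots,m$, where each $f_i \colon S \to \mathbb{R}$ is continuously differentiable and each $g_i \colon S \to \mathbb{R}$ is convex. For $\ell \ge 0$ and $x \in S$ define (with values in $\mathbb{R}\cup\{\infty\}$) \[ u_\ell(x) := \sup_{y \in S} \min_{i} \left\{F_i(x) - F_i(y) - \frac{\ell}{2}\|x-y\|^2\right\}, \qquad w_\ell(x) := \sup_{y \in S} \min_{i} \left\{ \nabla f_i(x)^\top (x - y) + g_i(x) - g_i(y) - \frac{\ell}{2}\|x - y\|^2 \right\}, \] the minima being over $i = 1,\dots,m$. Then: (i) If each $f_i$ is $\mu_i$-convex for some $\mu_i \in \mathbb{R}$ and $\mu := \min_i \mu_i$, then for all $\ell > 0$ and $x \in S$: if $\mu \ge 0$, $u_0(x) \le w_\mu(x)$ and $u_\ell(x) \le w_{\mu+\ell}(x)$; otherwise $u_{-\mu+\ell}(x) \le w_\ell(x)$. (ii) If each $\nabla f_i$ is $L_i$-Lipschitz continuous for some $L_i > 0$ and $L := \max_i L_i$, then for all $\ell > 0$ and $x \in S$: $u_{L+\ell}(x) \le w_\ell(x)$, $u_0(x) \ge w_L(x)$, and $u_\ell(x) \ge w_{L+\ell}(x)$.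
   Context: A function $h \colon S \to \mathbb{R}$ is $\sigma$-convex ($\sigma\in\mathbb{R}$) if $h(\alpha x + (1-\alpha)y) \le \alpha h(x) + (1-\alpha)h(y) - \frac{\alpha(1-\alpha)\sigma}{2}\|x-y\|^2$ for all $x,y \in S$, $\alpha \in [0,1]$. *)

(* Defs.v *)
From HB Require Import structures.
From mathcomp Require Import all_boot all_order all_algebra.
From mathcomp Require Import all_classical all_reals all_analysis.
Set Implicit Arguments. Unset Strict Implicit. Unset Printing Implicit Defensive.
Import Order.TTheory GRing.Theory Num.Theory.
Import numFieldNormedType.Exports.
Local Open Scope classical_set_scope.
Local Open Scope ring_scope.

Section Defs.
Context {R : realType} {n : nat}.

Definition dotv (x y : 'rV[R]_n) : R := \sum_(j < n) x ord0 j * y ord0 j.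
Definition sqnorm (x : 'rV[R]_n) : R := dotv x x.
Definition enorm (x : 'rV[R]_n) : R := Num.sqrt (sqnorm x).

Definition grad (f : 'rV[R]_n -> R) (x : 'rV[R]_n) : 'rV[R]_n :=
  \row_(j < n) ('d f x : 'rV[R]_n -> R) (delta_mx ord0 j).

Definition convex_setS (S : set 'rV[R]_n) : Prop :=
  forall x y a, S x -> S y -> 0 <= a <= 1 -> S (a *: x + (1 - a) *: y).

Definition convex_fun_on (S : set 'rV[R]_n) (h : 'rV[R]_n -> R) : Prop :=
  forall x y a, S x -> S y -> 0 <= a <= 1 ->
    h (a *: x + (1 - a) *: y) <= a * h x + (1 - a) * h y.

Definition sigma_convex (S : set 'rV[R]_n) (h : 'rV[R]_n -> R) (s : R) : Prop :=
  forall x y a, S x -> S y -> 0 <= a <= 1 ->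
    h (a *: x + (1 - a) *: y) <=
      a * h x + (1 - a) * h y - a * (1 - a) * s / 2 * sqnorm (x - y).

Definition C1_on (S : set 'rV[R]_n) (f : 'rV[R]_n -> R) : Prop :=
  (forall x, S x -> differentiable f x) /\ {within S, continuous (grad f)}.

Definition grad_lipschitz_on (S : set 'rV[R]_n) (f : 'rV[R]_n -> R) (L : R) : Prop :=
  forall x y, S x -> S y -> enorm (grad f x - grad f y) <= L * enorm (x - y).

Local Open Scope ereal_scope.

Definition u_merit (m : nat) (S : set 'rV[R]_n) (F : 'I_m -> 'rV[R]_n -> R)
  (l : R) (x : 'rV[R]_n) : \bar R :=
  ereal_sup [set \big[mine/+oo]_(i < m)
     ((F i x - F i y - l / 2 * sqnorm (x - y))%R)%:E | y in S].

Definition w_merit (m : nat) (S : set 'rV[R]_n) (f g : 'I_m -> 'rV[R]_n -> R)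
  (l : R) (x : 'rV[R]_n) : \bar R :=
  ereal_sup [set \big[mine/+oo]_(i < m)
     ((dotv (grad (f i) x) (x - y) + g i x - g i y - l / 2 * sqnorm (x - y))%R)%:E
     | y in S].

End Defs.

(* Main.v *)
Require Import Defs.
From HB Require Import structures.
From mathcomp Require Import all_boot all_order all_algebra.
From mathcomp Require Import all_classical all_reals all_analysis.
From mathcomp Require Import ring lra.
Import Order.TTheory GRing.Theory Num.Theory.
Import numFieldNormedType.Exports.
Local Open Scope classical_set_scope.
Local Open Scope ring_scope.

Section H.
Context {R : realType} {n : nat}.
Implicit Types x y a b : 'rV[R]_n.

Lemma supmin_le (m : nat) (S : set 'rV[R]_n) (A B : 'I_m -> 'rV[R]_n -> R) :
  (forall y i, S y -> A i y <= B i y) ->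
  (ereal_sup [set \big[mine/+oo]_(i < m) (A i y)%:E | y in S] <=
   ereal_sup [set \big[mine/+oo]_(i < m) (B i y)%:E | y in S])%E.
Proof.
move=> AB; apply: ge_ereal_sup => _ [y Sy <-].
apply: le_trans (ereal_sup_ubound _); last by exists y.
by apply: le_bigmin2 => i _; rewrite lee_fin AB.
Qed.

Lemma dotvDr a b c : dotv a (b + c) = dotv a b + dotv a c.
Proof. by rewrite /dotv -big_split; apply: eq_bigr => j _; rewrite !mxE mulrDr. Qed.
Lemma dotvZr a b (k : R) : dotv a (k *: b) = k * dotv a b.
Proof. by rewrite /dotv mulr_sumr; apply: eq_bigr => j _; rewrite !mxE mulrCA. Qed.
Lemma dotvC a b : dotv a b = dotv b a.
Proof. by apply: eq_bigr => j _; rewrite mulrC. Qed.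
Lemma dotvNr a b : dotv a (- b) = - dotv a b.
Proof. by rewrite -scaleN1r dotvZr mulN1r. Qed.
Lemma dotvBr a b c : dotv a (b - c) = dotv a b - dotv a c.
Proof. by rewrite dotvDr dotvNr. Qed.
Lemma dotvDl a b c : dotv (b + c) a = dotv b a + dotv c a.
Proof. by rewrite dotvC dotvDr !(dotvC a). Qed.
Lemma dotvZl a b (k : R) : dotv (k *: b) a = k * dotv b a.
Proof. by rewrite dotvC dotvZr dotvC. Qed.
Lemma dotvBl a b c : dotv (b - c) a = dotv b a - dotv c a.
Proof. by rewrite dotvC dotvBr !(dotvC a). Qed.
Lemma sqnorm_ge0 a : 0 <= sqnorm a.
Proof. by apply: sumr_ge0 => j _; rewrite -expr2 sqr_ge0. Qed.
Lemma sqnorm0 a : sqnorm a = 0 -> forall b, dotv a b = 0.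
Proof.
move=> /eqP; rewrite /sqnorm /dotv psumr_eq0 => [/allP H b|j _]; last by rewrite -expr2 sqr_ge0.
apply: big1 => j _.
have /H : j \in index_enum 'I_n by rewrite mem_index_enum.
by rewrite /= -expr2 sqrf_eq0 => /eqP ->; rewrite mul0r.
Qed.
Lemma sqnormE a : enorm a ^+ 2 = sqnorm a.
Proof. by rewrite /enorm sqr_sqrtr // sqnorm_ge0. Qed.
Lemma sqnormB a b : sqnorm (a - b) = sqnorm a - 2 * dotv a b + sqnorm b.
Proof. rewrite /sqnorm dotvBl !dotvBr (dotvC b a); ring. Qed.
Lemma sqnormBC a b : sqnorm (a - b) = sqnorm (b - a).
Proof. rewrite !sqnormB dotvC; ring. Qed.

Lemma CS a b : dotv a b <= enorm a * enorm b.
Proof.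
set s := enorm a; set t := enorm b.
have s0 : 0 <= s by exact: sqrtr_ge0.
have t0 : 0 <= t by exact: sqrtr_ge0.
have := sqnorm_ge0 (t *: a - s *: b).
rewrite sqnormB /sqnorm !dotvZl !dotvZr -!/(sqnorm _) -!sqnormE -/s -/t => H.
have [st0|st0] := eqVneq (s * t) 0.
  move/eqP: st0; rewrite mulf_eq0 => /orP[] /eqP z.
    by rewrite (sqnorm0 a) ?z ?mul0r // -sqnormE -/s z expr0n.
  by rewrite dotvC (sqnorm0 b) ?z ?mulr0 // -sqnormE -/t z expr0n.
have stp : 0 < s * t by rewrite lt0r st0 mulr_ge0.
rewrite -(ler_pM2l stp); nra.
Qed.

Lemma grad_dot (f : 'rV[R]_n -> R) a v : differentiable f a ->
  'd f a v = dotv (grad f a) v.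
Proof.
move=> _; rewrite {1}(row_sum_delta v) linear_sum /dotv.
by apply: eq_bigr => j _; rewrite linearZ /= mxE mulrC.
Qed.

Lemma phi_is_derive (f : 'rV[R]_n -> R) x d t : differentiable f (x + t *: d) ->
  is_derive t (1:R) (fun s => f (x + s *: d)) (dotv (grad f (x + t *: d)) d).
Proof.
move=> df.
have E : (fun h : R => h^-1 *: (((fun s => f (x + s *: d)) \o shift t) (h *: 1) - f (x + t *: d)))
  = (fun h => h^-1 *: ((f \o shift (x + t *: d)) (h *: d) - f (x + t *: d))).
  apply/funext => h /=; congr (_ *: (f _ - _)).
  by apply/rowP => j; rewrite !mxE /GRing.scale /=; ring.
apply: DeriveDef; first by rewrite /derivable E; exact: diff_derivable.
by rewrite /derive E -/(derive f _ d) deriveE // grad_dot.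
Qed.

Lemma psi_is_derive {phi : R -> R} {t dp : R} (c K : R) : is_derive t 1 phi dp ->
  is_derive t 1 (fun s => phi s - c * s - K * s ^+ 2) (dp - c - K * (2 * t)).
Proof.
move=> H.
have -> : (fun s => phi s - c * s - K * s ^+ 2) = phi - c \*: id - K \*: (id ^+ 2).
  by apply/funext => s /=.
apply: is_derive_eq.
rewrite /GRing.scale /= !mulr1 expr1; ring.
Qed.

Lemma enormZ a (t : R) : 0 <= t -> enorm (t *: a) = t * enorm a.
Proof.
move=> t0; rewrite /enorm /sqnorm dotvZl dotvZr mulrA -expr2 sqrtrM ?sqr_ge0 //.
by rewrite sqrtr_sqr ger0_norm.
Qed.

Lemma enormN a : enorm (- a) = enorm a.
Proof. by rewrite /enorm /sqnorm -scaleN1r dotvZl dotvZr mulrA; congr Num.sqrt; ring. Qed.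

Lemma enorm_ge0 a : 0 <= enorm a.
Proof. exact: sqrtr_ge0. Qed.

Lemma seg_in (S : set 'rV[R]_n) x y t : convex_setS S -> S x -> S y -> 0 <= t <= 1 ->
  S (x + t *: (y - x)).
Proof.
move=> cS Sx Sy t01.
have -> : x + t *: (y - x) = t *: y + (1 - t) *: x.
  by apply/rowP => j; rewrite !mxE; ring.
exact: cS.
Qed.

Lemma aux1 {A B c' c L t D : R} : B = A - c' -> c' = c -> B <= L * t * D ->
  A - c - L / 2 * D * (2 * t) <= 0.
Proof. move=> -> ->; lra. Qed.
Lemma aux2 {A B c' c L t D : R} : B = A - c' -> c' = c -> - B <= L * t * D ->
  0 <= A - c - - (L / 2 * D) * (2 * t).
Proof. move=> -> ->; lra. Qed.

Lemma descent (S : set 'rV[R]_n) (f : 'rV[R]_n -> R) L x y :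
  convex_setS S -> (forall z, S z -> differentiable f z) ->
  grad_lipschitz_on S f L -> S x -> S y ->
  f y <= f x + dotv (grad f x) (y - x) + L / 2 * sqnorm (y - x) /\
  f x + dotv (grad f x) (y - x) - L / 2 * sqnorm (y - x) <= f y.
Proof.
move=> cS df Lf Sx Sy.
set d := y - x; set c := dotv (grad f x) d; set D := sqnorm d.
set phi := fun s => f (x + s *: d).
have ec : dotv (grad f x) d = c by [].
have Sseg (t : R) : 0 <= t <= 1 -> S (x + t *: d) by move=> ?; exact: seg_in.
have Dphi (t : R) : 0 <= t <= 1 -> is_derive t 1 phi (dotv (grad f (x + t *: d)) d).
  by move=> t01; apply: phi_is_derive; apply: df; exact: Sseg.
have Lip (t : R) : 0 <= t <= 1 ->
    `|dotv (grad f (x + t *: d) - grad f x) d| <= L * t * D.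
  move=> t01; have /andP[t0 _] := t01.
  have eD : enorm d * enorm d = D by rewrite -expr2 sqnormE.
  rewrite ler_norml; apply/andP; split.
    rewrite lerNl (dotvC _ d) -dotvNr (dotvC d) opprB.
    apply: le_trans (CS _ _) _.
    apply: le_trans (ler_wpM2r (enorm_ge0 _) (Lf _ _ Sx (Sseg _ t01))) _.
    rewrite -opprB addrC addKr enormN enormZ // -eD; by rewrite !mulrA.
  apply: le_trans (CS _ _) _.
  apply: le_trans (ler_wpM2r (enorm_ge0 _) (Lf _ _ (Sseg _ t01) Sx)) _.
  by rewrite addrC addKr enormZ // -eD !mulrA.
have x1 : x + 1 *: d = y by rewrite scale1r /d addrC subrK.
have x0 : x + 0 *: d = x by rewrite scale0r addr0.
have in01 (t : R) : t \in `]0, 1[%R -> 0 <= t <= 1.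
  by rewrite in_itv /= => /andP[a b]; rewrite !ltW.
have cont (K : R) : {within `[0, 1], continuous (fun s => phi s - c * s - K * s ^+ 2)}.
  apply: continuous_in_subspaceT => t; rewrite inE /= in_itv /= => t01.
  apply: differentiable_continuous; apply/derivable1_diffP.
  have := psi_is_derive c (K) (Dphi _ t01); by case.
split.
  have := @ler0_derive1_nincr R (fun s => phi s - c * s - (L / 2 * D) * s ^+ 2) 0 1.
  move=> /(_ _ _ (cont _) 0 1 (lexx _) ler01 (lexx _)).
  rewrite /phi x1 x0 expr0n expr1n /= !mulr0 ?mulr1 !subr0 ?mulr1.
  have H : f y - c - L / 2 * D <= f x -> f y <= f x + c + L / 2 * D by lra.
  move=> I; apply: H; apply: I.
    by move=> t /in01 t01; have [] := psi_is_derive c (L / 2 * D) (Dphi _ t01).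
  move=> t /in01 t01; rewrite derive1E.
  have := psi_is_derive c (L / 2 * D) (Dphi _ t01) => -[_ ->].
  have := Lip _ t01 => /ler_normlP [_ h].
  have e := dotvBl d (grad f (x + t *: d)) (grad f x).
  exact: (aux1 e ec h).
have := @ger0_derive1_ndecr R (fun s => phi s - c * s - (- (L / 2 * D)) * s ^+ 2) 0 1.
move=> /(_ _ _ (cont _) 0 1 (lexx _) ler01 (lexx _)).
rewrite /phi x1 x0 expr0n expr1n /= !mulr0 ?mulr1 !subr0 ?mulr1.
have H : f x <= f y - c - - (L / 2 * D) -> f x + c - L / 2 * D <= f y by lra.
move=> I; apply: H; apply: I.
  by move=> t /in01 t01; have [] := psi_is_derive c (- (L / 2 * D)) (Dphi _ t01).
move=> t /in01 t01; rewrite derive1E.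
have := psi_is_derive c (- (L / 2 * D)) (Dphi _ t01) => -[_ ->].
have := Lip _ t01 => /ler_normlP [h _].
have e := dotvBl d (grad f (x + t *: d)) (grad f x).
exact: (aux2 e ec h).
Qed.
Lemma aux3 {F1 fx fy h s D : R} : 0 < h ->
  F1 <= h * fy + (1 - h) * fx - h * (1 - h) * s / 2 * D ->
  h^-1 * (F1 - fx) <= (fy - fx - s / 2 * D) + h * (s / 2 * D).
Proof. move=> h0 H; rewrite ler_pdivrMl //; nra. Qed.

Lemma sconv_grad (S : set 'rV[R]_n) (f : 'rV[R]_n -> R) s x y :
  sigma_convex S f s -> differentiable f x -> S x -> S y ->
  f x + dotv (grad f x) (y - x) + s / 2 * sqnorm (y - x) <= f y.
Proof.
move=> sc df Sx Sy.
set d := y - x; set D := sqnorm d.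
set q := fun h : R => h^-1 *: ((f \o shift x) (h *: d) - f x).
have cq : q @ 0^' --> 'D_d f x := @diff_derivable _ _ _ f x d df.
have cq' := cvg_dnbhs_at_right cq.
set C := f y - f x - s / 2 * D.
have cg : (fun h : R => C + h * (s / 2 * D)) @ 0^'+ --> C + 0 * (s / 2 * D).
  apply: cvg_at_right_filter; apply: cvgD; first exact: cvg_cst.
  apply: cvgMl; exact: cvg_id.
have key : \forall h \near 0^'+, q h <= C + h * (s / 2 * D).
  near=> h.
  have h0 : 0 < h by near: h; exact: nbhs_right_gt.
  have h1 : h <= 1 by near: h; apply: nbhs_right_le; exact: ltr01.
  have := sc y x h Sy Sx; rewrite ltW //= h1 => /(_ isT).
  have -> : h *: y + (1 - h) *: x = h *: d + x.
    by apply/rowP => j; rewrite !mxE; ring.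
  move=> H; exact: (aux3 h0 H).
have := ler_cvg_to cq' cg key.
rewrite deriveE // grad_dot // mul0r addr0 /C.
move=> /(_ (at_right_proper_filter _)) H; lra.
Unshelve. all: by end_near.
Qed.
End H.
Lemma auxI {R : realType} {fx fy gx gy G Gyx Q Qyx mi mu l1 l2 : R} :
  Gyx = - G -> Qyx = Q -> 0 <= Q -> mu <= mi -> l2 - l1 <= mu ->
  fx + Gyx + mi / 2 * Qyx <= fy ->
  fx + gx - (fy + gy) - l1 / 2 * Q <= G + gx - gy - l2 / 2 * Q.
Proof.
move=> -> -> Q0 m1 m2 H.
have : 0 <= (mi - (l2 - l1)) * Q by apply: mulr_ge0 => //; lra.
nra.
Qed.

Lemma auxII1 {R : realType} {fx fy gx gy G Gyx Q Qyx Li l1 l2 : R} :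
  Gyx = - G -> Qyx = Q -> 0 <= Q -> Li <= l1 - l2 ->
  fx + Gyx - Li / 2 * Qyx <= fy ->
  fx + gx - (fy + gy) - l1 / 2 * Q <= G + gx - gy - l2 / 2 * Q.
Proof.
move=> -> -> Q0 m1 H.
have : 0 <= (l1 - l2 - Li) * Q by apply: mulr_ge0 => //; lra.
nra.
Qed.

Lemma auxII2 {R : realType} {fx fy gx gy G Gyx Q Qyx Li l1 l2 : R} :
  Gyx = - G -> Qyx = Q -> 0 <= Q -> Li <= l2 - l1 ->
  fy <= fx + Gyx + Li / 2 * Qyx ->
  G + gx - gy - l2 / 2 * Q <= fx + gx - (fy + gy) - l1 / 2 * Q.
Proof.
move=> -> -> Q0 m1 H.
have : 0 <= (l2 - l1 - Li) * Q by apply: mulr_ge0 => //; lra.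
nra.
Qed.

Lemma swapG {R : realType} {n : nat} (a x y : 'rV[R]_n) : dotv a (y - x) = - dotv a (x - y).
Proof. by rewrite -dotvNr opprB. Qed.

Theorem theorem4p1 (R : realType) (n m : nat) (S : set 'rV[R]_n)
  (f g : 'I_m -> 'rV[R]_n -> R) :
  (0 < m)%N -> S !=set0 -> closed S -> convex_setS S ->
  (forall i, C1_on S (f i)) -> (forall i, convex_fun_on S (g i)) ->
  let F := fun i x => f i x + g i x in
  (* (i) *)
  (forall (mu_ : 'I_m -> R) (mu : R),
     (forall i, sigma_convex S (f i) (mu_ i)) ->
     (forall i, mu <= mu_ i) -> (exists i, mu_ i = mu) ->
     forall (l : R) (x : 'rV[R]_n), 0 < l -> S x ->
       (0 <= mu ->
          (u_merit S F 0 x <= w_merit S f g mu x)%E /\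
          (u_merit S F l x <= w_merit S f g (mu + l) x)%E) /\
       (mu < 0 -> (u_merit S F (- mu + l) x <= w_merit S f g l x)%E)) /\
  (* (ii) *)
  (forall (L_ : 'I_m -> R) (L : R),
     (forall i, 0 < L_ i) -> (forall i, grad_lipschitz_on S (f i) (L_ i)) ->
     (forall i, L_ i <= L) -> (exists i, L_ i = L) ->
     forall (l : R) (x : 'rV[R]_n), 0 < l -> S x ->
       (u_merit S F (L + l) x <= w_merit S f g l x)%E /\
       (w_merit S f g L x <= u_merit S F 0 x)%E /\
       (w_merit S f g (L + l) x <= u_merit S F l x)%E).
Proof.
move=> _ _ _ cS C1 _ F; split.
  move=> mu_ mu sc mule _ l x l0 Sx.
  have gi i y : S y -> f i x + dotv (grad (f i) x) (y - x) + mu_ i / 2 * sqnorm (y - x) <= f i y.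
    by move=> Sy; apply: sconv_grad => //; exact: (C1 i).1.
  have key l1 l2 : l2 - l1 <= mu ->
    (u_merit S F l1 x <= w_merit S f g l2 x)%E.
    move=> hl; apply: supmin_le => y i Sy.
    exact: (auxI (swapG _ x y) (sqnormBC y x) (sqnorm_ge0 _) (mule i) hl (gi i y Sy)).
  split; first by move=> _; split; apply: key; lra.
  by move=> _; apply: key; lra.
move=> L_ L _ Lip LL _ l x l0 Sx.
have df i : forall z, S z -> differentiable (f i) z by exact: (C1 i).1.
have up i y : S y -> f i y <= f i x + dotv (grad (f i) x) (y - x) + L_ i / 2 * sqnorm (y - x).
  by move=> Sy; have [] := @descent _ _ S (f i) (L_ i) x y cS (df i) (Lip i) Sx Sy.
have lo i y : S y -> f i x + dotv (grad (f i) x) (y - x) - L_ i / 2 * sqnorm (y - x) <= f i y.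
  by move=> Sy; have [] := @descent _ _ S (f i) (L_ i) x y cS (df i) (Lip i) Sx Sy.
have key1 l1 l2 : L <= l1 - l2 -> (u_merit S F l1 x <= w_merit S f g l2 x)%E.
  move=> hl; apply: supmin_le => y i Sy.
  exact: (auxII1 (swapG _ x y) (sqnormBC y x) (sqnorm_ge0 _) (le_trans (LL i) hl) (lo i y Sy)).
have key2 l1 l2 : L <= l2 - l1 -> (w_merit S f g l2 x <= u_merit S F l1 x)%E.
  move=> hl; apply: supmin_le => y i Sy.
  exact: (auxII2 (swapG _ x y) (sqnormBC y x) (sqnorm_ge0 _) (le_trans (LL i) hl) (up i y Sy)).
split; first by apply: key1; lra.
by split; apply: key2; lra.
Qed.
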